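(* (Label context weakening, subsets.) In DCC, if $\Delta_1;\Gamma\vdash M:A$, the label context $\Delta_2$ is well-formed, and $\Delta_1\subseteq\Delta_2$, then $\Delta_2;\Gamma\vdash M:A$.
   Context: DCC: expressions $x\mid U_i\mid\Pi x{:}A.B\mid L@M\mid\ell_i\{\overline M\}$ with label names $\ell_i$ and lists $\overline M$; type contexts $\Gamma::=\cdot\mid\Gamma,x{:}A$; label contexts $\Delta::=\cdot\mid\Delta,\ell_i(\{\overline x{:}\overline A\},x{:}A\mapsto M:B)$. Reduction: $\Delta\vdash\ell\{\overline M\}@N\triangleright L[\overline M/\overline x,N/x]$ when $\ell(\{\overline x{:}\overline A\},x{:}A\mapsto L:B)\in\Delta$; substitution standard with $\ell\{\overline M\}[N/x]=\ell\{\overline{M[N/x]}\}$. Equivalence $\Delta\vdash M\equiv N$: common reduct, or $\Delta\vdash L\triangleright^*\ell\{\overline N\}$, $\Delta\vdash M\triangleright^*M'$, $\ell(\{\overline x{:}\overline A\},x{:}A\mapsto N:B)\in\Delta$, $\Delta\vdash N[\overline N/\overline x]\equiv M'@x$ give $\Delta\vdash L\equiv M$, and symmetrically. Typing $\Delta;\Gamma\vdash M:A$ and formation $\vdash\Delta;\Gamma$ (mutual): variables from a well-formed context, $U_i:U_{i+1}$, $\Pi x{:}A.B:U_{\max(i,j)}$, $M@N:B[N/x]$ when $M:\Pi x{:}A.B$ and $N:A$, conversion along $\equiv$, and: if $\vdash\Delta;\Gamma$, $\ell(\{\overline x{:}\overline A\},x{:}A\mapsto M:B)\in\Delta$, $|\overline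 M|=|\overline x|$ and $\Delta;\Gamma\vdash M_k:A_k[M_1/x_1,\dots,M_{k-1}/x_{k-1}]$ for all $k$, then $\Delta;\Gamma\vdash\ell\{\overline M\}:\Pi x{:}A[\overline M/\overline x].B[\overline M/\overline x]$. Formation: $\vdash\cdot;\cdot$; fresh label entries may be added when $\Delta;\overline x{:}\overline A\vdash\Pi x{:}A.B:U_i$ and $\Delta;\overline x{:}\overline A,x{:}A\vdash M:B$; $\vdash\Delta;\Gamma,\Delta;\Gamma\vdash A:U_i\Rightarrow\vdash\Delta;\Gamma,x{:}A$. For well-formed label contexts, $\Delta_1\subseteq\Delta_2$ means every entry $\ell_i(\{\overline x{:}\overline A\},x{:}A\mapsto N:B)$ of $\Delta_1$ is also an entry of $\Delta_2$. *)

(* Defs.v *)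
From Stdlib Require Import List Arith.
Import ListNotations.

(* Terms: Var n (de Bruijn index), U i, Pi A B (B under one binder),
   App M N  (= M @ N),  Lab l Ms  (= l{Ms}). *)
Inductive term : Type :=
| Var : nat -> term
| U : nat -> term
| Pi : term -> term -> term
| App : term -> term -> term
| Lab : nat -> list term -> term.

Definition up_ren (xi : nat -> nat) : nat -> nat :=
  fun k => match k with 0 => 0 | S k' => S (xi k') end.

Fixpoint ren (xi : nat -> nat) (t : term) : term :=
  match t with
  | Var n => Var (xi n)
  | U i => U i
  | Pi A B => Pi (ren xi A) (ren (up_ren xi) B)
  | App M N => App (ren xi M) (ren xi N)
  | Lab l Ms => Lab l (map (ren xi) Ms)
  end.

Definition up (sigma : nat -> term) : nat -> term :=
  fun k => match k with 0 => Var 0 | S k' => ren S (sigma k') end.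

Fixpoint subst (sigma : nat -> term) (t : term) : term :=
  match t with
  | Var n => sigma n
  | U i => U i
  | Pi A B => Pi (subst sigma A) (subst (up sigma) B)
  | App M N => App (subst sigma M) (subst sigma N)
  | Lab l Ms => Lab l (map (subst sigma) Ms)
  end.

Definition scons (N : term) (sigma : nat -> term) : nat -> term :=
  fun k => match k with 0 => N | S k' => sigma k' end.

(* [Ms/xs] for Ms = [M_1; ...; M_n] written in telescope order:
   index 0 is x_n, index n-1 is x_1; indices >= n are shifted down by n. *)
Definition subst_list (Ms : list term) : nat -> term :=
  fun k => match nth_error (rev Ms) k with
           | Some M => M
           | None => Var (k - length Ms)
           end.

(* Label context entry  l({xs:As}, x:A |-> M : B):
   As = [A_1;...;A_n] is a telescope (A_k under k-1 binders),
   A is under n binders, M and B under n+1 binders (index 0 = x). *)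
Record lentry : Type := mkL {
  lname : nat;
  largs : list term;
  ldom : term;
  lbody : term;
  lcod : term }.

Definition lctx := list lentry.   (* head = most recently added *)
Definition ctx := list term.      (* head = most recently added  *)

Inductive step (D : lctx) : term -> term -> Prop :=
| st_beta : forall l As A L B Ms N,
    In (mkL l As A L B) D ->
    step D (App (Lab l Ms) N) (subst (scons N (subst_list Ms)) L)
| st_pi1 : forall A A' B, step D A A' -> step D (Pi A B) (Pi A' B)
| st_pi2 : forall A B B', step D B B' -> step D (Pi A B) (Pi A B')
| st_app1 : forall M M' N, step D M M' -> step D (App M N) (App M' N)
| st_app2 : forall M N N', step D N N' -> step D (App M N) (App M N')
| st_lab : forall l pre M M' post, step D M M' ->
    step D (Lab l (pre ++ M :: post)) (Lab l (pre ++ M' :: post)).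

Inductive steps (D : lctx) : term -> term -> Prop :=
| steps_refl : forall M, steps D M M
| steps_trans : forall M N L, step D M N -> steps D N L -> steps D M L.

Inductive equiv (D : lctx) : term -> term -> Prop :=
| eq_red : forall M N L, steps D M L -> steps D N L -> equiv D M N
| eq_eta1 : forall L M M' l Ns As A N B,
    steps D L (Lab l Ns) -> steps D M M' ->
    In (mkL l As A N B) D ->
    equiv D (subst (up (subst_list Ns)) N) (App (ren S M') (Var 0)) ->
    equiv D L M
| eq_eta2 : forall L M M' l Ns As A N B,
    steps D L (Lab l Ns) -> steps D M M' ->
    In (mkL l As A N B) D ->
    equiv D (App (ren S M') (Var 0)) (subst (up (subst_list Ns)) N) ->
    equiv D M L.

Definition lfresh (l : nat) (D : lctx) : Prop :=
  forall e, In e D -> lname e <> l.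

Inductive typ : lctx -> ctx -> term -> term -> Prop :=
| t_var : forall D G x A,
    wf D G -> nth_error G x = Some A ->
    typ D G (Var x) (ren (fun k => k + S x) A)
| t_U : forall D G i, wf D G -> typ D G (U i) (U (S i))
| t_pi : forall D G A B i j,
    typ D G A (U i) -> typ D (A :: G) B (U j) ->
    typ D G (Pi A B) (U (Nat.max i j))
| t_app : forall D G M N A B,
    typ D G M (Pi A B) -> typ D G N A ->
    typ D G (App M N) (subst (scons N Var) B)
| t_conv : forall D G M A B i,
    typ D G M A -> typ D G B (U i) -> equiv D A B -> typ D G M B
| t_lab : forall D G l As A L B Ms,
    wf D G -> In (mkL l As A L B) D ->
    length Ms = length As ->
    (forall k, k < length Ms ->
       typ D G (nth k Ms (Var 0))
               (subst (subst_list (firstn k Ms)) (nth k As (Var 0)))) ->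
    typ D G (Lab l Ms)
        (Pi (subst (subst_list Ms) A) (subst (up (subst_list Ms)) B))
with wf : lctx -> ctx -> Prop :=
| wf_nil : wf [] []
| wf_lab : forall D l As A M B i,
    typ D (rev As) (Pi A B) (U i) ->
    typ D (A :: rev As) M B ->
    lfresh l D ->
    wf (mkL l As A M B :: D) []
| wf_cons : forall D G A i,
    wf D G -> typ D G A (U i) -> wf D (A :: G).

Definition wf_lctx (D : lctx) : Prop := wf D [].

Definition lsubset (D1 D2 : lctx) : Prop := forall e, In e D1 -> In e D2.

(* Main.v *)
Require Import Defs.
From Stdlib Require Import List.

Scheme typ_mind := Induction for typ Sort Prop
with wf_mind := Induction for wf Sort Prop.

Lemma step_mono D1 D2 M N : step D1 M N -> lsubset D1 D2 -> step D2 M N.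
Proof.
  intros H S; induction H; try (constructor; auto; fail).
  eapply st_beta; apply S; eauto.
Qed.

Lemma steps_mono D1 D2 M N : steps D1 M N -> lsubset D1 D2 -> steps D2 M N.
Proof.
  intros H S; induction H; [constructor|]. econstructor; eauto using step_mono.
Qed.

Lemma equiv_mono D1 D2 M N : equiv D1 M N -> lsubset D1 D2 -> equiv D2 M N.
Proof.
  intros H S; induction H.
  - econstructor; eauto using steps_mono.
  - eapply eq_eta1; eauto using steps_mono.
  - eapply eq_eta2; eauto using steps_mono.
Qed.

Lemma mono_all :
  (forall D1 G M A, typ D1 G M A -> forall D2, wf_lctx D2 -> lsubset D1 D2 -> typ D2 G M A) /\
  (forall D1 G, wf D1 G -> forall D2, wf_lctx D2 -> lsubset D1 D2 -> wf D2 G).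
Proof.
  split; [apply (typ_mind (fun D1 G M A _ => forall D2, wf_lctx D2 -> lsubset D1 D2 -> typ D2 G M A)
                (fun D1 G _ => forall D2, wf_lctx D2 -> lsubset D1 D2 -> wf D2 G))
        |apply (wf_mind (fun D1 G M A _ => forall D2, wf_lctx D2 -> lsubset D1 D2 -> typ D2 G M A)
                (fun D1 G _ => forall D2, wf_lctx D2 -> lsubset D1 D2 -> wf D2 G))];
  intros; unfold wf_lctx in *;
  try solve [econstructor; eauto using equiv_mono].
  all: try (eapply t_lab; eauto).
  all: try (eapply t_conv; eauto using equiv_mono).
  all: try (econstructor; eauto).
  all: assumption.
Qed.

Theorem lemma3p8 : forall (D1 D2 : lctx) (G : ctx) (M A : term),
  typ D1 G M A -> wf_lctx D2 -> lsubset D1 D2 -> typ D2 G M A.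
Proof.
  intros; eapply (proj1 mono_all); eauto.
Qed.
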